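(* Let $\tilde C=(c_{nm}-c_{mn})_{n,m}$. Suppose there is a sequence of distinct nodes $n_1,\dots,n_k$ with $k>2$, such that $n_{i+1}\in\Omega_{n_i}$ for all $i$ (where $n_{k+1}:=n_1$), and $\sum_{i=1}^k\tilde C_{n_i,n_{i+1}}<0$. Then at every optimal solution of the centralized problem (P) there exists $i\in\{1,\dots,k\}$ with $q_{n_{i+1},n_i}=\kappa_{n_{i+1},n_i}$. Symmetrically, if $\sum_{i=1}^k\tilde C_{n_i,n_{i+1}}>0$, then at every optimal solution of (P) there exists $i$ with $q_{n_i,n_{i+1}}=\kappa_{n_i,n_{i+1}}$.
   Context: Model. $\mathcal N$ is a finite set of nodes (agents) containing a root node $0$. Each node $n$ has a neighborhood $\Omega_n\subseteq\mathcal N$ with $n\in\Omega_n$; the neighbor relation is symmetric ($m\in\Omega_n\iff n\in\Omega_m$) and every node is a neighbor of the root. Decision variables: demand $D_n$, flexibility activation $G_n$, and for each $m\in\Omega_n\setminus\{n\}$ a trade $q_{mn}\in\mathbb R$ (quantity sent from $m$ to $n$; $q_{mn}>0$ means $n$ buys from $m$). The net import of $n$ is $Q_n=\sum_{m\in\Omega_n\setminus\{n\}}q_{mn}$. Parameters: $0\le\underline D_n\le\overline D_n$, $0\le\underline G_n\le\overline G_n$, capacities $\kappa_{nm}=\kappa_{mn}\in[0,\infty)$, exogenous renewable generation $\Delta G_n$, constants $a_n,b_n,d_n>0$, $\tilde a_n,\tilde b_n>0$, target demand $D_n^\star$, preference prices $c_{nm}>0$. Costs/utilities: $C_n(G)=\tfrac12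 a_nG^2+b_nG+d_n$, $U_n(D)=-\tilde a_n(D-D_n^\star)^2+\tilde b_n$, $\tilde C_n(\mathbf q_n)=\sum_{m\in\Omega_n\setminus\{n\}}c_{nm}q_{mn}$, $\Pi_n=U_n(D_n)-C_n(G_n)-\tilde C_n(\mathbf q_n)$, $SW=\sum_{n\in\mathcal N}\Pi_n$. Centralized problem (P): maximize $SW$ over $(\mathbf D,\mathbf G,\mathbf q)$ subject to (1) $\underline D_n\le D_n\le\overline D_n$; (2) $\underline G_n\le G_n\le\overline G_n$; (3) $q_{mn}\le\kappa_{mn}$ for all $n$ and $m\in\Omega_n\setminus\{n\}$; (4) $q_{mn}+q_{nm}\le0$ for each pair of distinct neighbors; (5) $D_n=G_n+\Delta G_n+Q_n$ for all $n$. *)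

(* Defs.v *)
From HB Require Import structures.
From mathcomp Require Import all_boot all_order all_algebra.
Set Implicit Arguments. Unset Strict Implicit. Unset Printing Implicit Defensive.
Import Order.TTheory GRing.Theory Num.Theory.
Local Open Scope ring_scope.

Record model (R : realFieldType) (T : finType) := Model {
  root  : T;
  Omega : T -> T -> bool;       (* Omega n m  <=>  m \in Omega_n *)
  Dlo : T -> R; Dhi : T -> R;
  Glo : T -> R; Ghi : T -> R;
  kappa : T -> T -> R;
  dG : T -> R;
  ca : T -> R; cb : T -> R; cd : T -> R;
  ua : T -> R; ub : T -> R;
  Dstar : T -> R;
  c : T -> T -> R
}.

Definition wf_model (R : realFieldType) (T : finType) (M : model R T) : Prop :=
  (forall n, Omega M n n) /\
  (forall n m, Omega M n m = Omega M m n) /\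
  (forall n, Omega M (root M) n) /\
  (forall n, 0 <= Dlo M n /\ Dlo M n <= Dhi M n) /\
  (forall n, 0 <= Glo M n /\ Glo M n <= Ghi M n) /\
  (forall n m, kappa M n m = kappa M m n /\ 0 <= kappa M n m) /\
  (forall n, [/\ 0 < ca M n, 0 < cb M n & 0 < cd M n]) /\
  (forall n, 0 < ua M n /\ 0 < ub M n) /\
  (forall n m, 0 < c M n m).

(* q m n = q_{mn}: quantity sent from m to n (only relevant for m in Omega_n \ {n}). *)
Definition Qimp (R : realFieldType) (T : finType) (M : model R T)
  (q : T -> T -> R) (n : T) : R :=
  \sum_(m | Omega M n m && (m != n)) q m n.

Definition Cost (R : realFieldType) (T : finType) (M : model R T) (n : T) (g : R) : R :=
  2^-1 * ca M n * g ^+ 2 + cb M n * g + cd M n.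

Definition Util (R : realFieldType) (T : finType) (M : model R T) (n : T) (x : R) : R :=
  - (ua M n * (x - Dstar M n) ^+ 2) + ub M n.

Definition TradeCost (R : realFieldType) (T : finType) (M : model R T)
  (q : T -> T -> R) (n : T) : R :=
  \sum_(m | Omega M n m && (m != n)) c M n m * q m n.

Definition Pi (R : realFieldType) (T : finType) (M : model R T)
  (D G : T -> R) (q : T -> T -> R) (n : T) : R :=
  Util M n (D n) - Cost M n (G n) - TradeCost M q n.

Definition SW (R : realFieldType) (T : finType) (M : model R T)
  (D G : T -> R) (q : T -> T -> R) : R :=
  \sum_n Pi M D G q n.

Definition feasible (R : realFieldType) (T : finType) (M : model R T)
  (D G : T -> R) (q : T -> T -> R) : Prop :=
  [/\ (forall n, Dlo M n <= D n /\ D n <= Dhi M n),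
      (forall n, Glo M n <= G n /\ G n <= Ghi M n),
      (forall n m, Omega M n m -> m != n -> q m n <= kappa M m n),
      (forall n m, Omega M n m -> m != n -> q m n + q n m <= 0)
    & (forall n, D n = G n + dG M n + Qimp M q n)].

Definition optimal (R : realFieldType) (T : finType) (M : model R T)
  (D G : T -> R) (q : T -> T -> R) : Prop :=
  feasible M D G q /\
  (forall D' G' q', feasible M D' G' q' -> SW M D' G' q' <= SW M D G q).

Definition Ctilde (R : realFieldType) (T : finType) (M : model R T) (n m : T) : R :=
  c M n m - c M m n.

(* Main.v *)
Require Import Defs.
From HB Require Import structures.
From mathcomp Require Import all_boot all_order all_algebra.
From mathcomp Require Import ring lra zify.
Import Order.TTheory GRing.Theory Num.Theory.
Local Open Scope ring_scope.

Lemma sum_ind (R : pzRingType) (T : finType) (P : pred T) (a : T) (x : R) :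
  \sum_(m | P m) (m == a)%:R * x = (P a)%:R * x.
Proof.
case Pa: (P a).
- rewrite (bigD1 a) //= eqxx mul1r big1 ?addr0 // => m /andP[_ /negbTE ->].
  by rewrite mul0r.
- rewrite mul0r big1 // => m Pm; case: eqP => [e|_]; last by rewrite mul0r.
  by rewrite e Pa in Pm.
Qed.

Lemma bool_le (R : realFieldType) (b1 b2 b3 b4 : bool) :
  (b1%:R * b2%:R - b3%:R * b4%:R : R) <= b1%:R * b2%:R /\
  (b1%:R * b2%:R : R) <= 1.
Proof.
case: b1; case: b2; case: b3; case: b4; rewrite /= ?(mulr1, mul1r, mulr0, mul0r, subr0, sub0r);
  split; lra.
Qed.

Lemma gen (R : realFieldType) (T : finType) (M : model R T) (k : nat)
  (x y : 'I_k -> T)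
  (Hxy : forall i, Omega M (y i) (x i) && (x i != y i))
  (Hyx : forall i, Omega M (x i) (y i) && (y i != x i))
  (Hperm : forall n, \sum_i (n == x i)%:R = \sum_i (n == y i)%:R :> R)
  D G q (Hopt : optimal M D G q)
  (Hns : forall i, q (x i) (y i) != kappa M (x i) (y i)) :
  0 <= \sum_i (c M (y i) (x i) - c M (x i) (y i)).
Proof.
case: k x y Hxy Hyx Hperm Hns => [|k] x y Hxy Hyx Hperm Hns; first by rewrite big_ord0.
case: Hopt => [[HD HG Hcap Hanti Hbal] Hmax].
pose f := fun i => kappa M (x i) (y i) - q (x i) (y i).
have fpos : forall i, 0 < f i.
  move=> i; rewrite subr_gt0 lt_neqAle Hns /=.
  by case/andP: (Hxy i) => H1 H2; apply: Hcap.
case: (@arg_minP _ R _ ord0 xpredT f isT) => i0 _ Hmin.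
pose eps := f i0 / k.+1%:R.
have epos : 0 < eps by rewrite divr_gt0 ?ltr0Sn.
have epsk : eps * k.+1%:R = f i0 by rewrite /eps mulfVK // pnatr_eq0.
pose d := fun m n => \sum_i ((m == x i)%:R * (n == y i)%:R
                            - (m == y i)%:R * (n == x i)%:R) : R.
pose q' := fun m n => q m n + eps * d m n.
have K2 : forall n a b, Omega M b a && (a != b) ->
   \sum_(m | Omega M n m && (m != n)) (m == a)%:R * (n == b)%:R = (n == b)%:R :> R.
  move=> n a b Hba; rewrite (@sum_ind _ _ (fun m => Omega M n m && (m != n))).
  by case: (eqVneq n b) => [->|_]; rewrite ?Hba ?mul1r ?mulr0.
have K : forall (F : T -> T -> R) a b, Omega M b a && (a != b) ->
   \sum_n \sum_(m | Omega M n m && (m != n)) F n m * ((m == a)%:R * (n == b)%:R)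
   = F b a.
  move=> F a b Hba.
  transitivity (\sum_n (n == b)%:R * ((Omega M n a && (a != n))%:R * F n a)).
    apply: eq_bigr => n _.
    transitivity (\sum_(m | Omega M n m && (m != n)) (m == a)%:R * (F n a * (n == b)%:R)).
      apply: eq_bigr => m _; case: eqP => [->|_] /=.
        by rewrite !mul1r.
      by rewrite !mul0r mulr0.
    by rewrite (@sum_ind _ _ (fun m => Omega M n m && (m != n))) [RHS]mulrCA [F n a * _]mulrC.
  rewrite (bigD1 b) //= eqxx mul1r big1 ?addr0; first by rewrite Hba mul1r.
  by move=> n /negbTE ->; rewrite mul0r.
have dsum : forall n, \sum_(m | Omega M n m && (m != n)) d m n = 0.
  move=> n; rewrite exchange_big /=.
  under eq_bigr do rewrite sumrB (K2 _ _ _ (Hxy _)) (K2 _ _ _ (Hyx _)).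
  by rewrite sumrB Hperm subrr.
have dsym : forall m n, d m n + d n m = 0.
  move=> m n; rewrite /d -big_split big1 //= => i _; ring.
have feas : feasible M D G q'.
  split => //.
  - move=> n m Hnm Hmn; rewrite /q'.
    have dle : d m n <= \sum_i (m == x i)%:R * (n == y i)%:R.
      by apply: ler_sum => i _; case: (bool_le R (m == x i) (n == y i) (m == y i) (n == x i)).
    case: (boolP [exists i, (m == x i) && (n == y i)]).
    + case/existsP => i /andP[/eqP em /eqP en].
      have dk : d m n <= k.+1%:R.
        apply: le_trans dle _.
        have -> : k.+1%:R = \sum_(i < k.+1) (1 : R) by rewrite sumr_const card_ord.
        by apply: ler_sum => j _; case: (bool_le R (m == x j) (n == y j) false false).
      have h1 : eps * d m n <= eps * k.+1%:R by rewrite ler_pM2l.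
      have h2 := Hmin i isT.
      move: h1 h2; rewrite epsk /f -em -en; lra.
    + rewrite negb_exists => /forallP Hno.
      have : \sum_i (m == x i)%:R * (n == y i)%:R = 0 :> R.
        apply: big1 => i _; move: (Hno i); case: (m == x i); case: (n == y i) => //= _.
        by rewrite mulr0. by rewrite mul0r. by rewrite mul0r.
      move=> h0; rewrite h0 in dle.
      have : eps * d m n <= 0 by rewrite pmulr_rle0.
      have := Hcap n m Hnm Hmn; lra.
  - move=> n m Hnm Hmn; rewrite /q' addrACA -mulrDr dsym mulr0 addr0; exact: Hanti.
  - move=> n; rewrite Hbal /Qimp; congr (_ + _).
    by rewrite /q' big_split /= -mulr_sumr dsum mulr0 addr0.
have TCeq : forall n, TradeCost M q' n = TradeCost M q n +
     eps * \sum_(m | Omega M n m && (m != n)) c M n m * d m n.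
  move=> n; rewrite /TradeCost mulr_sumr -big_split; apply: eq_bigr => m _.
  by rewrite /q' mulrDr mulrCA.
have Zsum : \sum_n \sum_(m | Omega M n m && (m != n)) c M n m * d m n =
            \sum_i (c M (y i) (x i) - c M (x i) (y i)).
  transitivity (\sum_n \sum_i \sum_(m | Omega M n m && (m != n)) c M n m *
     ((m == x i)%:R * (n == y i)%:R - (m == y i)%:R * (n == x i)%:R)).
    apply: eq_bigr => n _; under eq_bigr do rewrite mulr_sumr.
    by rewrite exchange_big.
  rewrite exchange_big; apply: eq_bigr => i _.
  under eq_bigr do under eq_bigr do rewrite mulrBr.
  under eq_bigr do rewrite sumrB.
  by rewrite sumrB (K _ _ _ (Hxy i)) (K _ _ _ (Hyx i)).
have SWeq : SW M D G q' = SW M D G q - eps * \sum_i (c M (y i) (x i) - c M (x i) (y i)).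
  rewrite /SW -Zsum mulr_sumr -sumrB; apply: eq_bigr => n _.
  rewrite /Pi TCeq; ring.
have := Hmax D G q' feas; rewrite SWeq => H.
have : 0 <= eps * \sum_i (c M (y i) (x i) - c M (x i) (y i)) by lra.
by rewrite pmulr_rge0.
Qed.

(* The cycle n_1,...,n_k is s : 'I_k -> T; n_{i+1} is s (ordS i), cyclically. *)
Theorem proposition5 (R : realFieldType) (T : finType) (M : model R T)
  (HM : wf_model M) (k : nat) (s : 'I_k -> T)
  (Hk : (2 < k)%N) (Hinj : injective s)
  (Hnb : forall i : 'I_k, Omega M (s i) (s (ordS i))) :
  ((\sum_(i < k) Ctilde M (s i) (s (ordS i)) < 0) ->
     forall D G q, optimal M D G q ->
       exists i : 'I_k, q (s (ordS i)) (s i) = kappa M (s (ordS i)) (s i)) /\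
  ((\sum_(i < k) Ctilde M (s i) (s (ordS i)) > 0) ->
     forall D G q, optimal M D G q ->
       exists i : 'I_k, q (s i) (s (ordS i)) = kappa M (s i) (s (ordS i))).
Proof.
case: HM => _ [Hsym _].
have Hne : forall i : 'I_k, s (ordS i) != s i.
  move=> i; rewrite (inj_eq Hinj); apply/eqP => /(congr1 val) /=.
  have := ltn_ord i; case: (ltngtP i.+1 k) => h.
  - by rewrite modn_small //; lia.
  - lia.
  - by rewrite h modnn; lia.
have H1 : forall i : 'I_k, Omega M (s i) (s (ordS i)) && (s (ordS i) != s i).
  by move=> i; rewrite Hnb Hne.
have H2 : forall i : 'I_k, Omega M (s (ordS i)) (s i) && (s i != s (ordS i)).
  by move=> i; rewrite Hsym Hnb eq_sym Hne.
have Hperm : forall n, \sum_(i < k) (n == s (ordS i))%:R = \sum_(i < k) (n == s i)%:R :> R.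
  by move=> n; rewrite [RHS](reindex_inj (@ordS_inj k)).
split => [Hneg D G q Hopt | Hpos D G q Hopt].
- case: (boolP [exists i, q (s (ordS i)) (s i) == kappa M (s (ordS i)) (s i)]).
    by case/existsP => i /eqP; exists i.
  rewrite negb_exists => /forallP Hns.
  have := @gen R T M k (fun i => s (ordS i)) s H1 H2 Hperm D G q Hopt Hns.
  move: Hneg; rewrite /Ctilde; lra.
- case: (boolP [exists i, q (s i) (s (ordS i)) == kappa M (s i) (s (ordS i))]).
    by case/existsP => i /eqP; exists i.
  rewrite negb_exists => /forallP Hns.
  have := @gen R T M k s (fun i => s (ordS i)) H2 H1 (fun n => esym (Hperm n)) D G q Hopt Hns.
  have -> : \sum_i (c M (s (ordS i)) (s i) - c M (s i) (s (ordS i))) =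
            - \sum_(i < k) Ctilde M (s i) (s (ordS i)).
    by rewrite -sumrN; apply: eq_bigr => i _; rewrite /Ctilde opprB.
  move: Hpos; lra.
Qed.
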